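(* Let $\widehat{A}=A+\epsilon B$ and $\widehat{C}=C+\epsilon D$ with $A,B,C,D\in\mathbb{R}^{n\times n}$ be such that the dual core generalized inverses of $\widehat{A}$, $\widehat{C}$ and $\widehat{A}\widehat{C}$ exist and have the particular form $\widehat{A}^{\oplus}=A^{\oplus}-\epsilon A^{\oplus}BA^{\oplus}$, $\widehat{C}^{\oplus}=C^{\oplus}-\epsilon C^{\oplus}DC^{\oplus}$, $(\widehat{A}\widehat{C})^{\oplus}=(AC)^{\oplus}-\epsilon (AC)^{\oplus}(AD+BC)(AC)^{\oplus}$. If $AC=CA$, $A^*C=CA^*$, $C^{\oplus}B=BC^{\oplus}$ and $A^{\oplus}D=DA^{\oplus}$, then $(\widehat{A}\widehat{C})^{\oplus}=\widehat{A}^{\oplus}\widehat{C}^{\oplus}=\widehat{C}^{\oplus}\widehat{A}^{\oplus}$.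
   Context: A dual number is $a+\epsilon b$ with $a,b\in\mathbb{R}$, where $\epsilon\neq 0$, $\epsilon^2=0$ and $\epsilon$ commutes with reals. A dual matrix is $A+\epsilon B$ with $A,B$ real; sums and products are computed formally using $\epsilon^2=0$, transposition is $(A+\epsilon B)^T=A^T+\epsilon B^T$, and equality means equality of real and dual parts. $A^*$ denotes the (conjugate) transpose of a real matrix. For a real square matrix $A$ of index at most $1$, $A^{\oplus}$ denotes its core inverse, the unique matrix $G$ with $AGA=A$, $AG^2=G$, $(AG)^T=AG$. For a square dual matrix $\widehat{A}$ of dual index $1$, the dual core generalized inverse (DCGI) $\widehat{A}^{\oplus}$ is the dual matrix $\widehat{X}$ (if it exists) with $\widehat{A}\widehat{X}\widehat{A}=\widehat{A}$, $\widehat{A}\widehat{X}^2=\widehat{X}$, $(\widehat{A}\widehat{X})^T=\widehat{A}\widehat{X}$. *)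

(* Defs.v *)
From HB Require Import structures.
From mathcomp Require Import all_boot all_order all_algebra.
From mathcomp Require Export reals.
Set Implicit Arguments. Unset Strict Implicit. Unset Printing Implicit Defensive.
Import GRing.Theory Num.Theory.
Local Open Scope ring_scope.

Definition is_core_inverse (R : realType) (n : nat) (A G : 'M[R]_n) : Prop :=
  [/\ A *m G *m A = A, A *m (G *m G) = G & (A *m G)^T = A *m G].

(* Dual matrices  P + eps Q  with eps^2 = 0. *)
Record dmat (R : realType) (n : nat) := DMat { dre : 'M[R]_n; ddu : 'M[R]_n }.

Definition dmul (R : realType) (n : nat) (X Y : dmat R n) : dmat R n :=
  DMat (dre X *m dre Y) (dre X *m ddu Y + ddu X *m dre Y).

Definition dtr (R : realType) (n : nat) (X : dmat R n) : dmat R n :=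
  DMat (dre X)^T (ddu X)^T.

Definition is_dcgi (R : realType) (n : nat) (Ah X : dmat R n) : Prop :=
  [/\ dmul (dmul Ah X) Ah = Ah, dmul Ah (dmul X X) = X
    & dtr (dmul Ah X) = dmul Ah X].

(* Main.v *)
Require Import Defs.
From HB Require Import structures.
From mathcomp Require Import all_boot all_order all_algebra.
From mathcomp Require Import reals.
Import GRing.Theory Num.Theory.
Local Open Scope ring_scope.

Lemma core_cancel (R : realType) (n : nat) (A X V : 'M[R]_n) :
  is_core_inverse A X -> A *m (A *m V) = 0 -> A *m V = 0.
Proof.
case=> h1 h2 h3 hV.
have eA : A = A *m A *m (X *m X *m A).
  by rewrite !mulmxA -(mulmxA A A X) -(mulmxA A (A *m X) X) -(mulmxA A X X) h2.
have : (A <= A *m A)%MS.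
  have sub := submxMl A A.
  have := mxrank_leqif_sup sub.
  move=> [_ <-]. apply/eqP/anti_leq; rewrite mxrankM_maxl /=.
  by rewrite {1}eA mxrankM_maxl.
case/submxP=> Y ->.
by rewrite -!mulmxA hV mulmx0.
Qed.

Lemma core_comm (R : realType) (n : nat) (A X C : 'M[R]_n) :
  is_core_inverse A X -> A *m C = C *m A -> A^T *m C = C *m A^T ->
  X *m C = C *m X.
Proof.
move=> hc hAC hATC; have [h1 h2 h3] := hc.
have hCT : C^T *m A = A *m C^T by rewrite -[A in RHS]trmxK -trmx_mul -hATC trmx_mul trmxK.
have gAC (Y : 'M[R]_n) : C *m (A *m Y) = A *m (C *m Y) by rewrite !mulmxA hAC.
have gCT (Y : 'M[R]_n) : C^T *m (A *m Y) = A *m (C^T *m Y) by rewrite !mulmxA hCT.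
have g1 (Y : 'M[R]_n) : A *m (X *m (A *m Y)) = A *m Y by rewrite !mulmxA h1.
have e1 : A *m (X *m (C *m (A *m X))) = C *m (A *m X).
  by rewrite gAC g1.
have e2 : A *m (X *m (C^T *m (A *m X))) = C^T *m (A *m X).
  by rewrite gCT g1.
have PT : (A *m X)^T = A *m X by exact: h3.
have CP : C *m (A *m X) = A *m (X *m C).
  have e2' : (A *m X) *m C^T *m (A *m X) = C^T *m (A *m X) by rewrite -!mulmxA.
  have e1' : (A *m X) *m C *m (A *m X) = C *m (A *m X) by rewrite -!mulmxA.
  move: e2'; set P := A *m X => e2'.
  have := congr1 trmx e2'; rewrite !trmx_mul trmxK -[X^T *m A^T]trmx_mul h3 => e3.
  by rewrite -e1' -mulmxA e3 -mulmxA.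
have eX : X = A *m (X *m X) by rewrite h2.
apply/eqP; rewrite -subr_eq0; apply/eqP. 
have -> : X *m C - C *m X = A *m (X *m (X *m C) - C *m (X *m X)).
  by rewrite mulmxBr {1}eX -!mulmxA -gAC -eX.
apply: (@core_cancel R n A X _ hc).
have k1 : A *m (X *m (X *m C)) = X *m C by rewrite (mulmxA X X C) mulmxA h2.
by rewrite !mulmxBr k1 -gAC -eX -gAC CP subrr.
Qed.

Lemma core_uniq (R : realType) (n : nat) (M X Y : 'M[R]_n) :
  is_core_inverse M X -> is_core_inverse M Y -> X = Y.
Proof.
move=> hX hY; have [x1 x2 x3] := hX; have [y1 y2 y3] := hY.
have eMX : M *m X = M *m Y.
  have e : M *m X = (M *m Y) *m (M *m X) by rewrite mulmxA y1.
  by rewrite -x3 e trmx_mul x3 y3 mulmxA x1.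
apply/eqP; rewrite -subr_eq0; apply/eqP.
have -> : X - Y = M *m (X *m X - Y *m Y) by rewrite mulmxBr x2 y2.
apply: (@core_cancel R n M X _ hX).
by rewrite mulmxBr x2 y2 mulmxBr eMX subrr.
Qed.

Lemma core_XAX (R : realType) (n : nat) (A X : 'M[R]_n) :
  is_core_inverse A X -> X *m A *m X = X.
Proof.
move=> hc; have [h1 h2 h3] := hc.
have eX : X = A *m (X *m X) by rewrite h2.
have Z0 : X *m A *m A = A.
  apply/eqP; rewrite -subr_eq0; apply/eqP.
  have -> : X *m A *m A - A = A *m (X *m X *m A *m A - X *m A).
    by rewrite mulmxBr !mulmxA -(mulmxA A X X) -eX h1.
  apply: (@core_cancel R n A X _ hc).
  rewrite mulmxBr !mulmxA h1 -(mulmxA A X X) -eX.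
  by rewrite mulmxBr !mulmxA h1 subrr.
by rewrite {2}eX !mulmxA Z0 -mulmxA -eX.
Qed.

Lemma gen (R : realType) (n : nat) (U V : 'M[R]_n) :
  U *m V = V *m U -> forall Y : 'M[R]_n, U *m (V *m Y) = V *m (U *m Y).
Proof. by move=> e Y; rewrite !mulmxA e. Qed.

Arguments core_XAX {R n A X}.
Arguments gen {R n U V}.
Arguments core_uniq {R n M X Y}.

Theorem mainTheorem9 (R : realType) (n : nat) (A B C D GA GC GAC : 'M[R]_n) :
  is_core_inverse A GA ->
  is_core_inverse C GC ->
  is_core_inverse (A *m C) GAC ->
  is_dcgi (DMat A B) (DMat GA (- (GA *m B *m GA))) ->
  is_dcgi (DMat C D) (DMat GC (- (GC *m D *m GC))) ->
  is_dcgi (dmul (DMat A B) (DMat C D))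
          (DMat GAC (- (GAC *m (A *m D + B *m C) *m GAC))) ->
  A *m C = C *m A ->
  A^T *m C = C *m A^T ->
  GC *m B = B *m GC ->
  GA *m D = D *m GA ->
  DMat GAC (- (GAC *m (A *m D + B *m C) *m GAC))
    = dmul (DMat GA (- (GA *m B *m GA))) (DMat GC (- (GC *m D *m GC)))
  /\ dmul (DMat GA (- (GA *m B *m GA))) (DMat GC (- (GC *m D *m GC)))
    = dmul (DMat GC (- (GC *m D *m GC))) (DMat GA (- (GA *m B *m GA))).
Proof.
move=> hA hC hAC _ _ _ eAC eATC eGCB eGAD.
have [a1 a2 a3] := hA; have [c1 c2 c3] := hC.
have tAC : A^T *m C^T = C^T *m A^T by rewrite -!trmx_mul eAC.
have tCA : C^T *m A = A *m C^T.
  by rewrite -[A in RHS]trmxK -[A in LHS]trmxK -!trmx_mul eATC.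
have cA : GA *m C = C *m GA := @core_comm R n A GA C hA eAC eATC.
have cC : GC *m A = A *m GC := @core_comm R n C GC A hC (esym eAC) tCA.
have cCT : GC *m A^T = A^T *m GC :=
  @core_comm R n C GC A^T hC (esym eATC) (esym tAC).
have cG : GA *m GC = GC *m GA :=
  @core_comm R n A GA GC hA (esym cC) (esym cCT).
have xA := core_XAX hA; have xC := core_XAX hC.
have gCGA := gen (esym cA).
have gCA := gen cC.
have gCA' := gen (esym eAC).
have gGCGA := gen (esym cG).
have gDGA := gen (esym eGAD).
have gBGC := gen (esym eGCB).
have g1A (Y : 'M[R]_n) : A *m (GA *m (A *m Y)) = A *m Y by rewrite !mulmxA a1.
have g2A (Y : 'M[R]_n) : A *m (GA *m (GA *m Y)) = GA *m Y by rewrite (mulmxA GA GA Y) mulmxA a2.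
have gxA (Y : 'M[R]_n) : GA *m (A *m (GA *m Y)) = GA *m Y by rewrite !mulmxA xA.
have c1' : C *m (GC *m C) = C by rewrite mulmxA c1.
have c2' : C *m (GC *m GC) = GC by rewrite c2.
have xC' : GC *m (C *m GC) = GC by rewrite mulmxA xC.
have hG : is_core_inverse (A *m C) (GA *m GC).
  split.
  - by rewrite -!mulmxA gCGA gCA gCA' g1A c1'.
  - by rewrite -!mulmxA gGCGA gCGA gCGA g2A c2'.
  - have e : A *m C *m (GA *m GC) = (A *m GA) *m (C *m GC).
      by rewrite -!mulmxA gCGA.
    have e' : (A *m GA) *m (C *m GC) = (C *m GC) *m (A *m GA).
      by rewrite -!mulmxA gCA gCA' -cG gCGA.
    by rewrite e trmx_mul a3 c3 e'.
have eG : GAC = GA *m GC := core_uniq hAC hG.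
have f1 : GA *m GC *m (A *m D) *m (GA *m GC) = GA *m (GC *m D *m GC).
  by rewrite -!mulmxA gCA gDGA gGCGA gxA.
have f2 : GA *m GC *m (B *m C) *m (GA *m GC) = GA *m B *m GA *m GC.
  by rewrite -!mulmxA -gBGC gCGA gGCGA xC'.
split.
  rewrite /dmul /= eG; congr DMat.
  by rewrite mulmxDr mulmxDl f1 f2 mulmxN mulNmx opprD.
rewrite /dmul /=; congr DMat; first exact: cG.
rewrite !mulmxN !mulNmx addrC; congr (- _ + - _).
  by rewrite -!mulmxA cG gBGC gGCGA.
by rewrite -!mulmxA -cG gDGA gGCGA.
Qed.
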